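(* Let $f$ be a 3-CNF formula with clauses $C_1,\dots,C_m$ over variables $x_1,\dots,x_n$, each clause being a disjunction of three literal occurrences. Let $H$ be the graph constructed as follows: for each clause $C_i=x\vee y\vee z$ introduce six vertices $x^{(i,1)},y^{(i,1)},z^{(i,1)},x^{(i,2)},y^{(i,2)},z^{(i,2)}$ inducing a subgraph $H_i$ which is the complete graph on these six vertices minus the three edges $x^{(i,1)}x^{(i,2)}$, $y^{(i,1)}y^{(i,2)}$, $z^{(i,1)}z^{(i,2)}$; the vertices $x^{(i,1)},y^{(i,1)},z^{(i,1)}$ are associated with the literals $x,y,z$ of $C_i$. Additionally, for any two vertices $u,v$ lying in different subgraphs $H_i\neq H_j$, both associated with literals, such that the literal associated with $u$ is the negation of the literal associated with $v$, add the edge $uv$. There are no other edges. Then $\mathrm{diss}(H)=2m$, and $f$ is satisfiable if and only if $\mathrm{diss}(H)=\alpha(H)$.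
   Context: All graphs are finite, simple and undirected. A set $I$ of vertices of a graph $G$ is a dissociation set if the induced subgraph $G[I]$ has maximum degree at most $1$; $\mathrm{diss}(G)$ is the maximum order of a dissociation set in $G$. $\alpha(G)$ is the independence number. *)

(* Defs.v *)
From mathcomp Require Import all_boot.
Set Implicit Arguments. Unset Strict Implicit. Unset Printing Implicit Defensive.

Section GraphParams.
Variable T : finType.
Variable e : rel T.

Definition dissociation_set (I : {set T}) : bool :=
  [forall x in I, #|[set y in I | e x y]| <= 1].

Definition independent_set (I : {set T}) : bool :=
  [forall x in I, forall y in I, ~~ e x y].

Definition diss : nat := \max_(I : {set T} | dissociation_set I) #|I|.
Definition alpha : nat := \max_(I : {set T} | independent_set I) #|I|.
End GraphParams.

(** Literals over variables x_0..x_{n-1}: (variable, polarity); true = positive. *)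
Definition lit (n : nat) := ('I_n * bool)%type.
Definition lneg n (l : lit n) : lit n := (l.1, ~~ l.2).
Definition lit_true n (a : 'I_n -> bool) (l : lit n) : bool := a l.1 == l.2.

Definition cnf3 (n m : nat) := 'I_m -> 'I_3 -> lit n.

Definition satisfiable n m (f : cnf3 n m) : Prop :=
  exists a : 'I_n -> bool, forall i : 'I_m, exists k : 'I_3, lit_true a (f i k).

(** Vertices of H: (i, k, c) is the copy c of the k-th literal occurrence of
    clause C_i; c = true is copy (i,1) (associated with the literal),
    c = false is copy (i,2). *)
Definition Hvert (m : nat) := ('I_m * 'I_3 * bool)%type.

Definition Hedge n m (f : cnf3 n m) : rel (Hvert m) := fun u v =>
  if u.1.1 == v.1.1 then
    (* inside H_i: complete graph minus the edges x^(i,1) x^(i,2) *)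
    u.1.2 != v.1.2
  else
    [&& u.2, v.2 & f u.1.1 u.1.2 == lneg (f v.1.1 v.1.2)].

(* Main.v *)
Require Import Defs.
From mathcomp Require Import all_boot.
Set Implicit Arguments. Unset Strict Implicit. Unset Printing Implicit Defensive.

Section S.
Variables (n m : nat) (f : cnf3 n m).
Notation V := (Hvert m).
Notation E := (Hedge f).
Definition blk (I : {set V}) (i : 'I_m) := [set v in I | v.1.1 == i].

Lemma card_blk (I : {set V}) : #|I| = \sum_(i < m) #|blk I i|.
Proof.
rewrite -sum1_card (partition_big (fun v : V => v.1.1) xpredT) //=.
apply eq_bigr => i _; rewrite -sum1_card; apply eq_bigl => v; by rewrite inE.
Qed.

Lemma cardU_le (T : finType) (A B : {set T}) : #|A :|: B| <= #|A| + #|B|.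
Proof. by rewrite cardsU leq_subr. Qed.

Lemma blk_le2 (I : {set V}) : dissociation_set E I -> forall i, #|blk I i| <= 2.
Proof.
move=> /forallP dI i. set B := blk I i.
have hB : forall x, x \in B -> #|[set y in B | x.1.2 != y.1.2]| <= 1.
  move=> x xB. have xI : x \in I by move: xB; rewrite inE => /andP[].
  have := dI x; rewrite xI /= => H.
  apply: leq_trans H; apply: subset_leq_card; apply/subsetP => y.
  move: xB; rewrite !inE => /andP[_ /eqP xi] /andP[/andP[yI /eqP yi] ne].
  by rewrite yI /Hedge xi yi eqxx ne.
have Bi : forall z, z \in B -> z.1.1 = i by move=> z; rewrite inE => /andP[_ /eqP].
clearbody B.
have [->|[x xB]] := set_0Vmem B; first by rewrite cards0.
have [E0|[y yN]] := set_0Vmem [set y in B | x.1.2 != y.1.2].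
  apply: leq_trans (_ : #|[set (i, x.1.2, true); (i, x.1.2, false)]| <= 2).
    apply: subset_leq_card; apply/subsetP => z zB.
    have : z \notin [set y in B | x.1.2 != y.1.2] by rewrite E0 inE.
    rewrite !inE zB /= negbK => /eqP zk.
    have zi := Bi z zB.
    case: z zB zi zk => [[zi' zk'] []] _ /= -> ->; by rewrite eqxx ?orbT.
  by rewrite cards2; case: (_ != _).
move: yN; rewrite inE => /andP[yB nxy].
apply: leq_trans (_ : #|[set z in B | y.1.2 != z.1.2] :|: [set z in B | x.1.2 != z.1.2]| <= 2).
  apply: subset_leq_card; apply/subsetP => z zB; rewrite !inE zB /=.
  case: (eqVneq y.1.2 z.1.2) => [<-|] //=.
apply: leq_trans (cardU_le _ _) _.
by rewrite -[2]/(1 + 1); apply: leq_add; apply: hB.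
Qed.

Lemma diss_le : diss E <= 2 * m.
Proof.
apply/bigmax_leqP => I dI; rewrite card_blk.
apply: (@leq_trans (\sum_(i < m) 2)); first by apply: leq_sum => i _; exact: blk_le2.
by rewrite sum_nat_const card_ord mulnC.
Qed.

Lemma indep_diss (I : {set V}) : independent_set E I -> dissociation_set E I.
Proof.
move=> /forallP iI; apply/forallP => x; apply/implyP => xI.
rewrite (_ : [set y in I | E x y] = set0) ?cards0 //; apply/setP => y.
rewrite !inE; case yI: (y \in I) => //=.
by have := iI x; rewrite xI /= => /forallP /(_ y); rewrite yI /= => /negbTE.
Qed.

Lemma alpha_le : alpha E <= diss E.
Proof.
apply/bigmax_leqP => I iI; apply: leq_bigmax_cond; exact: indep_diss.
Qed.

Definition k0 : 'I_3 := Ordinal (isT : 0 < 3).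
Definition k1 : 'I_3 := Ordinal (isT : 1 < 3).
Definition g (p : 'I_m * bool) : V := (p.1, if p.2 then k1 else k0, false).

Lemma g_inj : injective g.
Proof.
move=> [i b] [j c] [-> h]; congr pair; by case: b c h => [] [].
Qed.

Lemma diss_ge : 2 * m <= diss E.
Proof.
have -> : 2 * m = #|[set g p | p in [set: 'I_m * bool]]|.
  by rewrite card_imset; [rewrite cardsT card_prod card_ord card_bool mulnC| exact g_inj].
apply: leq_bigmax_cond; apply/forallP => x; apply/implyP => /imsetP[[i b] _ ->].
apply: leq_trans (_ : #|[set g (i, ~~ b)]| <= 1); last by rewrite cards1.
apply: subset_leq_card; apply/subsetP => y; rewrite !inE => /andP[/imsetP[[j c] _ ->]].
rewrite /Hedge /g /=; case: eqP => [<-|] //= h.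
by case: b c h => [] [].
Qed.

Lemma diss_eq : diss E = 2 * m.
Proof. by apply/eqP; rewrite eqn_leq diss_le diss_ge. Qed.

Lemma sat_alpha : satisfiable f -> 2 * m <= alpha E.
Proof.
move=> [a ha].
pose k i := odflt k0 [pick kk | lit_true a (f i kk)].
have hk : forall i, lit_true a (f i (k i)).
  move=> i; rewrite /k; case: pickP => //= H.
  by have [kk] := ha i; rewrite H.
pose h (p : 'I_m * bool) : V := (p.1, k p.1, p.2).
have h_inj : injective h by move=> [i b] [j c] [-> _ ->].
have -> : 2 * m = #|[set h p | p in [set: 'I_m * bool]]|.
  by rewrite card_imset; [rewrite cardsT card_prod card_ord card_bool mulnC| exact h_inj].
apply: leq_bigmax_cond; apply/forallP => x; apply/implyP => /imsetP[[i b] _ ->].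
apply/forallP => y; apply/implyP => /imsetP[[j c] _ ->].
rewrite /Hedge /h /=; case: eqP => [<-|_]; first by rewrite eqxx.
apply/negP => /and3P[_ _ /eqP e].
have := hk i; have := hk j; rewrite e /lit_true /lneg /=.
by move=> /eqP ->; case: (_ .2).
Qed.

Lemma alpha_sat : alpha E = 2 * m -> satisfiable f.
Proof.
move=> hA.
have [I iI cI] : exists2 I : {set V}, independent_set E I & #|I| = 2 * m.
  have pos : 0 < #|independent_set E|.
    apply/card_gt0P; exists set0; rewrite unfold_in; apply/forallP => x.
    by rewrite inE.
  have [I0 iI0 e] := eq_bigmax_cond (fun I : {set V} => #|I|) pos.
  exists I0; first by [].
  by rewrite -e -hA.
have dI := indep_diss iI.
have b2 : forall i, #|blk I i| = 2.
  have h2 := blk_le2 dI.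
  have : \sum_(i < m) (2 - #|blk I i|) == 0.
    rewrite -(eqn_add2r (\sum_(i < m) #|blk I i|)) add0n -big_split /=.
    rewrite (eq_bigr (fun _ => 2)) => [|i _]; last by rewrite subnK.
    by rewrite sum_nat_const card_ord -card_blk cI mulnC.
  rewrite sum_nat_eq0 => /forallP H i; have := H i; have := h2 i.
  by rewrite /= subn_eq0 => a b; apply/eqP; rewrite eqn_leq a b.
have ex : forall i, exists kk, (i, kk, true) \in I.
  move=> i; have : 1 < #|blk I i| by rewrite b2.
  case/card_gt1P => u [v [uB vB nuv]].
  move: uB vB; rewrite !inE => /andP[uI /eqP ui] /andP[vI /eqP vi].
  have kuv : u.1.2 = v.1.2.
    move/forallP: iI => /(_ u); rewrite uI /= => /forallP /(_ v); rewrite vI /=.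
    by rewrite /Hedge ui vi eqxx negbK => /eqP.
  case: u uI ui nuv kuv => [[ui' uk] []] uI /= ui nuv kuv.
    by exists uk; rewrite -ui.
  case: v vI vi nuv kuv => [[vi' vk] []] vI /= vi nuv kuv.
    by exists vk; rewrite -vi.
  by exfalso; move/eqP: nuv; apply; rewrite ui vi kuv.
pose k i := odflt k0 [pick kk | (i, kk, true) \in I].
have hk : forall i, (i, k i, true) \in I.
  move=> i; rewrite /k; case: pickP => //= H.
  by have [kk kI] := ex i; have := H kk; rewrite /= kI.
exists (fun v => [exists i, f i (k i) == (v, true)]) => i.
exists (k i); rewrite /lit_true.
case e : (f i (k i)) => [v b] /=.
case: b e => e; first by rewrite eqb_id; apply/existsP; exists i; rewrite e.
rewrite eqbF_neg.
apply/negP => /existsP [j /eqP ej].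
have nij : i != j by apply/eqP => eij; move: e; rewrite eij ej.
move/forallP: iI => /(_ (i, k i, true)); rewrite hk /= => /forallP /(_ (j, k j, true)).
rewrite hk /= /Hedge /= (negbTE nij) /= e ej /lneg /=.
by rewrite eqxx.
Qed.

End S.

Theorem mainTheorem9 (n m : nat) (f : cnf3 n m) :
  diss (Hedge f) = 2 * m /\ (satisfiable f <-> diss (Hedge f) = alpha (Hedge f)).
Proof.
split; first exact: diss_eq.
rewrite diss_eq; split.
  move=> s; apply/eqP; rewrite eqn_leq (sat_alpha s) /=.
  by rewrite -(diss_eq f) alpha_le.
by move=> h; apply: alpha_sat.
Qed.
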